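(* Let $A$ be a T-brace and let $n$ be a natural number. Then for every $a\in\zeta_n(\star,A)$, the subbrace $\mathbf{br}(a)$ generated by $a$ is an ideal of $A$.
   Context: A (left) brace is a set $A$ with two operations $+$ and $\cdot$ such that $(A,+)$ is an abelian group, $(A,\cdot)$ is a group, and $a(b+c)=ab+ac-a$ for all $a,b,c\in A$. Put $a\star b=ab-a-b$. A subbrace is a subset which is a subgroup of both $(A,+)$ and $(A,\cdot)$; $\mathbf{br}(a)$ is the intersection of all subbraces containing $a$. A subbrace $L$ is an ideal if $a\star z, z\star a\in L$ for all $a\in A$, $z\in L$, and then the quotient brace $A/L$ is defined. $A$ is a T-brace if whenever $I$ is an ideal of $J$ and $J$ is an ideal of $A$, then $I$ is an ideal of $A$. The $\star$-center is $\zeta(\star,A)=\{a: a\star x=x\star a=0\ \forall x\}$; the upper $\star$-central series is $\zeta_0(\star,A)=0$, $\zeta_{n+1}(\star,A)/\zeta_n(\star,A)=\zeta(\star,A/\zeta_n(\star,A))$, each term an ideal of $A$. *)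

(* Defs.v *)
From mathcomp Require Import all_boot all_algebra.
Set Implicit Arguments. Unset Strict Implicit. Unset Printing Implicit Defensive.
Import GRing.Theory.
Local Open Scope ring_scope.

(* A (left) brace structure on an abelian group (T,+) : zmodType. *)
Record brace (T : zmodType) := Brace {
  bmul : T -> T -> T;
  binv : T -> T;
  bone : T;
  bmulA : forall a b c, bmul a (bmul b c) = bmul (bmul a b) c;
  bmul1 : forall a, bmul bone a = a;
  bmulV : forall a, bmul (binv a) a = bone;
  bmulD : forall a b c, bmul a (b + c) = bmul a b + bmul a c - a
}.

Section BraceDefs.
Variables (T : zmodType) (B : brace T).

Definition star (a b : T) : T := bmul B a b - a - b.

Definition subbrace (S : T -> Prop) : Prop :=
  (S 0 /\ (forall x y, S x -> S y -> S (x + y)) /\ (forall x, S x -> S (- x))) /\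
  (S (bone B) /\ (forall x y, S x -> S y -> S (bmul B x y))
    /\ (forall x, S x -> S (binv B x))).

Definition br (a : T) : T -> Prop :=
  fun x => forall S, subbrace S -> S a -> S x.

Definition ideal_of (J I : T -> Prop) : Prop :=
  [/\ subbrace I, (forall x, I x -> J x)
    & forall a z, J a -> I z -> I (star a z) /\ I (star z a)].

Definition ideal (I : T -> Prop) : Prop := ideal_of (fun _ => True) I.

Definition Tbrace : Prop :=
  forall I J : T -> Prop, ideal J -> ideal_of J I -> ideal I.

(* upper star-central series; zeta_{n+1} is the preimage in A of the
   star-center of A/zeta_n, i.e. a such that a*x, x*a lie in zeta_n. *)
Fixpoint zeta (n : nat) : T -> Prop :=
  match n with
  | O => fun a => a = 0
  | S m => fun a => forall x, zeta m (star a x) /\ zeta m (star x a)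
  end.

End BraceDefs.

(* Main.v *)
Require Import Defs.
From mathcomp Require Import all_boot all_algebra.
Set Implicit Arguments. Unset Strict Implicit. Unset Printing Implicit Defensive.
Import GRing.Theory.
Local Open Scope ring_scope.

Section I.
Variable V : zmodType.
Implicit Types p q a x y : V.
Lemma I2 (P Q R X Y : V) : (P - Q - Y) - (R - X - Y) = P - (Q + R - X).
Proof. by rewrite !opprD !opprK !addrA -!(addrAC _ (-Y)) -!(addrAC _ Y) addrK. Qed.
Lemma I3 (u i x a : V) : u - i - x = - (x - (a + u)) - (i + a).
Proof. by rewrite !opprD !opprK !addrA -!(addrAC _ (-a)) subrK -!(addrAC _ (-x)) (addrC u). Qed.
End I.

Section S.
Variables (T : zmodType) (B : brace T).
Local Notation m := (bmul B).
Local Notation inv := (binv B).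
Local Notation st := (star B).

Lemma mulx0 x : m x 0 = x.
Proof.
have H := bmulD B x 0 0; rewrite addr0 in H.
have : m x 0 - m x 0 = m x 0 + m x 0 - x - m x 0 by rewrite -H.
rewrite subrr addrAC addrK => /eqP; rewrite eq_sym subr_eq0 => /eqP //.
Qed.

Lemma bone0 : bone B = 0.
Proof. by rewrite -(bmul1 B 0) mulx0. Qed.

Lemma mul0x x : m 0 x = x.
Proof. by rewrite -bone0 bmul1. Qed.

Lemma mulVl x : m (inv x) x = 0.
Proof. by rewrite bmulV bone0. Qed.

Lemma mulVr x : m x (inv x) = 0.
Proof.
have H : m (inv x) (m x (inv x)) = inv x.
  rewrite bmulA. rewrite mulVl. by rewrite mul0x.
have H2 := congr1 (m (inv (inv x))) H.
by rewrite bmulA mulVl mul0x in H2.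
Qed.

Lemma mulB a x y : m a (x - y) = m a x - m a y + a.
Proof.
have H := bmulD B a (x - y) y; rewrite subrK in H.
by rewrite H addrAC subrK addrK.
Qed.

Lemma mul_st a x : m a x = a + x + st a x.
Proof. by rewrite /star -(addrA (m a x)) -opprD [RHS]addrC subrK. Qed.

Lemma stD a x y : st a (x + y) = st a x + st a y.
Proof.
rewrite /star bmulD opprD !addrA -!(addrAC _ (m a y)).
by rewrite (addrAC _ (-x) (-a)).
Qed.

Lemma st0r a : st a 0 = 0.
Proof. by rewrite /star mulx0 subrr subr0. Qed.

Lemma st0l a : st 0 a = 0.
Proof. by rewrite /star mul0x subr0 subrr. Qed.

Lemma stN a x : st a (- x) = - st a x.
Proof.
apply/eqP; rewrite -addr_eq0 -stD addNr st0r //.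
Qed.

Lemma stB a x y : st a (x - y) = st a x - st a y.
Proof. by rewrite stD stN. Qed.

Lemma inv0 : inv 0 = 0.
Proof. by rewrite -(mulx0 (inv 0)) mulVl. Qed.


Section Ideal.
Variable N : T -> Prop.
Hypothesis HN : ideal B N.

Lemma N0 : N 0.
Proof. by case: HN => [[[h0 [hD hN]] [h1 [hM hI]]] hsub hst]. Qed.
Lemma ND x y : N x -> N y -> N (x + y).
Proof. by case: HN => [[[h0 [hD hN]] [h1 [hM hI]]] hsub hst]; auto. Qed.
Lemma NN x : N x -> N (- x).
Proof. by case: HN => [[[h0 [hD hN]] [h1 [hM hI]]] hsub hst]; auto. Qed.
Lemma NNE x : N (- x) -> N x.
Proof. by move/NN; rewrite opprK. Qed.
Lemma NB x y : N x -> N y -> N (x - y).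
Proof. by move=> ? ?; apply: ND => //; apply: NN. Qed.
Lemma Nstl a z : N z -> N (st a z).
Proof. by case: HN => _ _ H /(H a) []. Qed.
Lemma Nstr a z : N z -> N (st z a).
Proof. by case: HN => _ _ H /(H a) []. Qed.

Definition cong x y := N (x - y).

Lemma congR x : cong x x.
Proof. by rewrite /cong subrr; apply: N0. Qed.
Lemma congS x y : cong x y -> cong y x.
Proof. by rewrite /cong => /NN; rewrite opprB. Qed.
Lemma congT x y z : cong x y -> cong y z -> cong x z.
Proof. by rewrite /cong => H1 H2; have := ND H1 H2; rewrite addrA subrK. Qed.
Lemma congD x y x' y' : cong x x' -> cong y y' -> cong (x + y) (x' + y').
Proof.
rewrite /cong => H1 H2; have := ND H1 H2.
by rewrite opprD !addrA -!(addrAC _ y) (addrAC _ (-x')).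
Qed.
Lemma congN x x' : cong x x' -> cong (- x) (- x').
Proof. by rewrite /cong => /NN; rewrite opprB addrC opprK. Qed.
Lemma congB x y x' y' : cong x x' -> cong y y' -> cong (x - y) (x' - y').
Proof. by move=> H1 H2; apply: congD => //; apply: congN. Qed.
Lemma cong0 x : N x -> cong x 0.
Proof. by rewrite /cong subr0. Qed.
Lemma congN0 x y : cong x y -> N y -> N x.
Proof. by rewrite /cong => H1 H2; have := ND H1 H2; rewrite subrK. Qed.

Lemma cong_mulr x y y' : cong y y' -> cong (m x y) (m x y').
Proof.
rewrite /cong => H; have -> : m x y - m x y' = (y - y') + st x (y - y').
  apply: (addIr x). by rewrite -mulB mul_st [RHS]addrC [RHS]addrA.
apply: ND => //; exact: Nstl.
Qed.

Lemma cong_mull x x' y : cong x x' -> cong (m x y) (m x' y).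
Proof.
move=> H.
have E : x' = m x (m (inv x) x') by rewrite bmulA mulVr mul0x.
have Hn : N (m (inv x) x').
  have := cong_mulr (inv x) (congS H); rewrite mulVl /cong subr0 //.
rewrite E -bmulA; apply: cong_mulr.
rewrite /cong [X in _ - X]mul_st (addrC (m (inv x) x') y) -addrA opprD addNKr.
by apply: NN; apply: ND => //; apply: Nstr.
Qed.

Lemma cong_mul x x' y y' : cong x x' -> cong y y' -> cong (m x y) (m x' y').
Proof. by move=> H1 H2; apply: congT (cong_mull _ H1) (cong_mulr _ H2). Qed.

Lemma cong_inv x x' : cong x x' -> cong (inv x) (inv x').
Proof.
move=> H.
have E : inv x = m (m (inv x) x') (inv x') by rewrite -bmulA mulVr mulx0.
rewrite E.
have F : cong (m (m (inv x) x') (inv x')) (m (m (inv x) x) (inv x')).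
  by apply: cong_mull; apply: cong_mulr; apply: congS.
by rewrite mulVl mul0x in F.
Qed.

Lemma cong_st x x' y y' : cong x x' -> cong y y' -> cong (st x y) (st x' y').
Proof. by move=> H1 H2; rewrite /star; apply: congB => //; apply: congB => //; apply: cong_mul. Qed.


Definition central c := forall x, N (st c x) /\ N (st x c).

Lemma central_cong c c' : cong c c' -> central c' -> central c.
Proof.
move=> H Hc x; have [H1 H2] := Hc x; split.
  by apply: congN0 H1; apply: cong_st => //; apply: congR.
by apply: congN0 H2; apply: cong_st => //; apply: congR.
Qed.

Lemma central_mul_l c x : central c -> cong (m c x) (c + x).
Proof. by move=> Hc; rewrite /cong mul_st addrC addKr; case: (Hc x). Qed.

Lemma central_mul_r c x : central c -> cong (m x c) (x + c).
Proof. by move=> Hc; rewrite /cong mul_st addrC addKr; case: (Hc x). Qed.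

Lemma st_addC x c y : central c -> cong (st (x + c) y) (st x y).
Proof.
move=> Hc; apply: congT (_ : cong _ (st (m x c) y)) _.
  by apply: cong_st; [apply: congS; apply: central_mul_r | apply: congR].
rewrite /cong {1}/star -bmulA {1}/star.
rewrite I2 -bmulD; apply: cong_mulr; exact: central_mul_l.
Qed.

Lemma central0 : central 0.
Proof. by move=> x; rewrite st0l st0r; split; apply: N0. Qed.

Lemma centralN c : N c -> central c.
Proof. by move=> Hc x; split; [apply: Nstr | apply: Nstl]. Qed.

Lemma central_add a b : central a -> central b -> central (a + b).
Proof.
move=> Ha Hb x; split.
  by apply: congN0 (st_addC a x Hb) _; case: (Ha x).
by rewrite stD; apply: ND; [case: (Ha x) | case: (Hb x)].
Qed.

Lemma cong_inv_opp a : central a -> cong (inv a) (- a).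
Proof.
move=> Ha; have := central_mul_l (inv a) Ha.
by rewrite /cong mulVr sub0r opprK addrC => /NNE.
Qed.

Lemma central_inv a : central a -> central (inv a).
Proof.
move=> Ha x; split.
  have H := central_mul_l (m (inv a) x) Ha.
  rewrite bmulA mulVr mul0x /cong in H.
  rewrite {1}/star (I3 _ _ _ a); apply: NB; first by apply: NN.
  by have := cong_inv_opp Ha; rewrite /cong opprK.
apply: congN0 (_ : cong _ (st x (- a))) _.
  by apply: cong_st; [apply: congR | apply: cong_inv_opp].
by rewrite stN; apply: NN; case: (Ha x).
Qed.

Lemma central_opp a : central a -> central (- a).
Proof.
move=> Ha; apply: central_cong (central_inv Ha).
by apply: congS; apply: cong_inv_opp.
Qed.

Lemma central_mul a b : central a -> central b -> central (m a b).
Proof.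
move=> Ha Hb; apply: central_cong (central_add Ha Hb).
exact: central_mul_l.
Qed.

Lemma ideal_central : ideal B central.
Proof.
split.
- split.
    split; first exact: central0.
    split; [exact: central_add | exact: central_opp].
  split; first by rewrite bone0; exact: central0.
  split; [exact: central_mul | exact: central_inv].
- by [].
- move=> a z _ Hz; split; apply: centralN; by case: (Hz a).
Qed.

End Ideal.

Lemma zeta_ideal k : ideal B (zeta B k).
Proof.
elim: k => [|k IH]; last exact: (ideal_central IH).
split.
- split.
    split; first by [].
    by split; [move=> x y /= -> ->; rewrite addr0 | move=> x /= ->; rewrite oppr0].
  split; first exact: bone0.
  split; first by move=> x y /= -> ->; rewrite mul0x.
  by move=> x /= ->; rewrite inv0.
- by [].
- by move=> a z _ /= ->; rewrite st0l st0r.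
Qed.

Lemma subbrace_st P y y' : subbrace B P -> P y -> P y' -> P (st y y').
Proof.
move=> [[h0 [hD hN]] [h1 [hM hI]]] Hy Hy'; rewrite /star.
by apply: (hD); [apply: (hD); [apply: (hM) | apply: (hN)] | apply: (hN)].
Qed.

Lemma br_sub a : subbrace B (br B a).
Proof.
split.
  split; first by move=> S [[h0 _] _].
  split.
    move=> x y Hx Hy S HS Ha; move: (HS) => [[_ [hD _]] _].
    by apply: (hD); [apply: Hx | apply: Hy].
  by move=> x Hx S HS Ha; move: (HS) => [[_ [_ hN]] _]; apply: (hN); apply: Hx.
split; first by move=> S [_ [h1 _]].
split.
  move=> x y Hx Hy S HS Ha; move: (HS) => [_ [_ [hM _]]].
  by apply: (hM); [apply: Hx | apply: Hy].
by move=> x Hx S HS Ha; move: (HS) => [_ [_ [_ hI]]]; apply: (hI); apply: Hx.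
Qed.

Lemma br_self a : br B a a.
Proof. by move=> S _. Qed.

Definition Jk (N P : T -> Prop) z := exists y, P y /\ N (z - y).

Lemma J_sub N P : ideal B N -> subbrace B P -> subbrace B (Jk N P).
Proof.
move=> HN [[h0 [hD hN]] [h1 [hM hI]]].
split.
  split; first by exists 0; split => //; rewrite subrr; apply: N0.
  split.
    move=> x y [x' [Hx' Cx]] [y' [Hy' Cy]]; exists (x' + y'); split; first exact: hD.
    exact: congD.
  move=> x [x' [Hx' Cx]]; exists (- x'); split; first exact: hN.
  exact: congN.
split; first by exists (bone B); split => //; rewrite subrr; apply: N0.
split.
  move=> x y [x' [Hx' Cx]] [y' [Hy' Cy]]; exists (m x' y'); split; first exact: hM.
  exact: cong_mul.
move=> x [x' [Hx' Cx]]; exists (inv x'); split; first exact: hI.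
exact: cong_inv.
Qed.

Lemma J_ideal_of k P : subbrace B P ->
  ideal_of B (Jk (zeta B k.+1) P) (Jk (zeta B k) P).
Proof.
move=> HP; have HN := zeta_ideal k; split.
- exact: J_sub.
- by move=> z [y [Py Nz]]; exists y; split => //; apply: (centralN HN).
move=> a z [y' [Py' Hc]] [y [Py Nz]]; split.
  exists (st y' y); split; first exact: subbrace_st.
  apply: (congT HN) (_ : cong (zeta B k) _ (st a y)) _.
    by apply: (cong_st HN) => //; apply: (congR HN).
  have Ea : a = y' + (a - y') by rewrite addrC subrK.
  rewrite [X in st X y]Ea; exact: (st_addC HN).
exists (st y y'); split; first exact: subbrace_st.
apply: (congT HN) (_ : cong (zeta B k) _ (st y a)) _.
  by apply: (cong_st HN) => //; apply: (congR HN).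
have Ea : a = y' + (a - y') by rewrite addrC subrK.
rewrite [X in st y X]Ea stD /cong addrAC subrr add0r.
by case: (Hc y).
Qed.

End S.

From Stdlib Require Import FunctionalExtensionality PropExtensionality.

Lemma pred_ext (T : Type) (P Q : T -> Prop) : (forall x, P x <-> Q x) -> P = Q.
Proof.
move=> H; apply: functional_extensionality => x; apply: propositional_extensionality; exact: H.
Qed.

Theorem lemma3p1 (T : zmodType) (B : brace T) (n : nat) (a : T) :
  Tbrace B -> zeta B n a -> ideal B (br B a).
Proof.
move=> HT Ha.
have top : ideal B (Jk (zeta B n) (br B a)).
  have -> : Jk (zeta B n) (br B a) = zeta B n; last exact: zeta_ideal.
  apply: pred_ext => z; split.
    move=> [y [Hy Hz]].
    have Zy : zeta B n y by apply: Hy => //; case: (zeta_ideal B n).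
    have := ND (zeta_ideal B n) Hz Zy; by rewrite subrK.
  by move=> Hz; exists 0; split; [case: (br_sub B a) => [[]] | rewrite subr0].
have step : forall d k, (k + d)%N = n -> ideal B (Jk (zeta B k) (br B a)).
  elim=> [|d IH] k Hk; first by rewrite addn0 in Hk; rewrite Hk.
  apply: (HT _ (Jk (zeta B k.+1) (br B a))).
    by apply: IH; rewrite addSnnS.
  by apply: J_ideal_of; apply: br_sub.
have := step n 0%N (add0n n).
have -> // : Jk (zeta B 0) (br B a) = br B a.
apply: pred_ext => z; split.
  by move=> [y [Hy /= /eqP]]; rewrite subr_eq0 => /eqP ->.
by move=> Hz; exists z; split => //=; rewrite subrr.
Qed.
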